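(* Let $G=(V,E,\partial)$ be a finite discrete graph with standard weights ($w_e=1$) and no magnetic potential, let $V_0\subseteq V$ and let $V_1\subsetneq V_0$ be a proper subset. For any two different $s$-partitions $A$ and $B$ of a natural number $r\ge4$, the equilateral metric graphs $\mathcal F_{A,V_1}$ and $\mathcal F_{B,V_1}$ associated with the discrete $V_1$-contracted frame unions $F_{A,V_1}(G,V_0)$ and $F_{B,V_1}(G,V_0)$ are isospectral (for the Kirchhoff Laplacian) and not isomorphic.
   Context: A graph $G=(V,E,\partial)$: finite disjoint sets $V,E$, incidence $\partial e=(\partial_-e,\partial_+e)$, inversion $e\mapsto\bar e$ ($\bar{\bar e}=e$, $\bar e\ne e$, $\partial_\pm\bar e=\partial_\mp e$); loops/multiple edges allowed; every vertex has positive degree. Contraction of vertices along an equivalence relation keeps all edges and replaces vertices by classes. Frame member: $G^a$ is the disjoint union of $a$ copies $G\times\{j\}$; with $(v,i)\sim(v',j)$ iff $(v,i)=(v',j)$ or ($v=v'\in V_0$), $F_a(G,V_0)=G^a/\!\sim$. An $s$-partition of $r$ is a multiset $A=\{\!\{a_1,\dots,a_s\}\!\}$ of natural numbers with sum $r$; $F_A=\bigsqcup_{i=1}^sF_{a_i}(G,V_0)\times\{i\}$, and $F_{A,V_1}$ is obtained from $F_A$ by contracting, for each $v_1\in V_1$, the $s$ vertices $([v_1],i)$ into one vertex. The equilateral metric graph $\mathcal G$ of a discrete graph: choose one edge from each pair $\{e,\bar e\}$, replace it by a copy of $[0,1]$, and glue the endpoints $0,1$ of the copy of $e$ to $\partial_-e,\partial_+e$.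 The Kirchhoff Laplacian acts as $-f_e''$ on each edge, on functions in $H^2$ on each edge that are continuous at every vertex and satisfy $\sum_{e\in E_v}f_e'(0)=0$ (derivatives taken outward from $v$) at every vertex $v$. Isospectral means the eigenvalues agree with multiplicity. *)

(* Defs.v *)
From HB Require Import structures.
From mathcomp Require Import all_boot all_order all_algebra.
From mathcomp Require Import all_classical all_reals all_analysis.
Set Implicit Arguments. Unset Strict Implicit. Unset Printing Implicit Defensive.
Import Order.TTheory GRing.Theory Num.Theory.

Record graph := Graph {
  gV : finType;
  gE : finType;
  dminus : gE -> gV;
  dplus  : gE -> gV;
  einv   : gE -> gE
}.

Definition wf_graph (G : graph) : Prop :=
  (forall e : gE G, einv (einv e) = e) /\
  (forall e : gE G, einv e <> e) /\
  (forall e : gE G, dminus (einv e) = dplus e /\ dplus (einv e) = dminus e) /\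
  (forall v : gV G, exists e : gE G, dminus e = v).

Definition graph_iso (G H : graph) : Prop :=
  exists (fV : gV G -> gV H) (fE : gE G -> gE H),
    bijective fV /\ bijective fE /\
    (forall e : gE G, fV (dminus e) = dminus (fE e)) /\
    (forall e : gE G, fV (dplus e) = dplus (fE e)) /\
    (forall e : gE G, fE (einv e) = einv (fE e)).

Definition classes (T : finType) (r : rel T) :=
  {C : {set T} | [exists v, C == [set w | r v w]]}.

Definition cls (T : finType) (r : rel T) (v : T) : classes r :=
  exist _ [set w | r v w] (introT existsP (@ex_intro _ (fun v' => [set w | r v w] == [set w | r v' w]) v (eqxx _))).

Definition contract (G : graph) (r : rel (gV G)) : graph :=
  @Graph (classes r) (gE G)
    (fun e => cls r (dminus e)) (fun e => cls r (dplus e)) (@einv G).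

Definition copies (G : graph) (a : nat) : graph :=
  @Graph ((gV G * 'I_a)%type) ((gE G * 'I_a)%type)
    (fun e => (dminus e.1, e.2)) (fun e => (dplus e.1, e.2))
    (fun e => (einv e.1, e.2)).

Definition frame_rel (G : graph) (V0 : {set gV G}) (a : nat) : rel (gV G * 'I_a) :=
  fun x y => (x == y) || ((x.1 == y.1) && (x.1 \in V0)).

Definition frame (G : graph) (V0 : {set gV G}) (a : nat) : graph :=
  @contract (copies G a) (@frame_rel G V0 a).

Definition dunion (I : finType) (F : I -> graph) : graph :=
  @Graph ({i : I & gV (F i)}) ({i : I & gE (F i)})
    (fun e => Tagged (fun i => gV (F i)) (dminus (tagged e)))
    (fun e => Tagged (fun i => gV (F i)) (dplus (tagged e)))
    (fun e => Tagged (fun i => gE (F i)) (einv (tagged e))).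

(* A partition A = {{a_1,...,a_s}} is represented by a sequence (order irrelevant). *)
Definition frame_union (G : graph) (V0 : {set gV G}) (A : seq nat) : graph :=
  dunion (fun i : 'I_(size A) => frame V0 (nth 0 A i)).

(* x is the vertex ([v1], i) of F_A *)
Definition is_class_of (G : graph) (V0 : {set gV G}) (A : seq nat)
    (v1 : gV G) (x : gV (frame_union V0 A)) : bool :=
  [exists j : 'I_(nth 0 A (tag x)), (v1, j) \in val (tagged x)].

Definition V1_rel (G : graph) (V0 V1 : {set gV G}) (A : seq nat)
    : rel (gV (frame_union V0 A)) :=
  fun x y => (x == y) ||
    [exists v1 in V1, @is_class_of G V0 A v1 x && @is_class_of G V0 A v1 y].

Definition contracted_frame_union (G : graph) (V0 V1 : {set gV G}) (A : seq nat)
  : graph := @contract (frame_union V0 A) (@V1_rel G V0 V1 A).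

Definition is_partition (s r : nat) (A : seq nat) : bool :=
  (size A == s) && all (fun a => 0 < a) A && (sumn A == r).

(* Each oriented edge e is a copy of [0,1] from ∂_- e (at 0) to ∂_+ e (at 1); the
   function on ē is the reversed function on e: f_ē(x) = f_e(1 - x).
   Eigenfunctions on [0,1] are smooth and extend uniquely to solutions of
   the ODE on all of R; we represent each f_e by this extension. *)
Section Metric.
Variable R : realType.
Local Open Scope ring_scope.

Definition kirchhoff_eigenfunction (G : graph) (lam : R) (f : gE G -> R -> R)
  : Prop :=
  (forall e x, derivable (f e) x 1 /\ derivable (derive1 (f e)) x 1 /\
               - derive1 (derive1 (f e)) x = lam * f e x) /\
  (forall e x, f (einv e) x = f e (1 - x)) /\
  (exists phi : gV G -> R, forall e, f e 0 = phi (dminus e)) /\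
  (forall v : gV G, \sum_(e | dminus e == v) derive1 (f e) 0 = 0).

Definition has_m_indep_eigenfunctions (G : graph) (lam : R) (m : nat) : Prop :=
  exists fs : 'I_m -> gE G -> R -> R,
    (forall i, @kirchhoff_eigenfunction G lam (fs i)) /\
    (forall c : 'I_m -> R,
       (forall e x, 0 <= x <= 1 -> \sum_(i < m) c i * fs i e x = 0) ->
       forall i, c i = 0).

Definition isospectral (G H : graph) : Prop :=
  forall (lam : R) (m : nat),
    @has_m_indep_eigenfunctions G lam m <-> @has_m_indep_eigenfunctions H lam m.
End Metric.

(* Main.v *)
Require Import Defs.
From HB Require Import structures.
From mathcomp Require Import all_boot all_order all_algebra.
From mathcomp Require Import all_classical all_reals all_analysis.
From mathcomp Require Import ring zify.

Set Implicit Arguments. Unset Strict Implicit. Unset Printing Implicit Defensive.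

Module P1.
Import Order.TTheory GRing.Theory Num.Theory.
Local Open Scope ring_scope.

Section An.
Variable R : realType.

Lemma is_derive_lin (I : eqType) (s : seq I) (k : I -> R) (h : I -> R -> R) (x : R) :
  (forall i, derivable (h i) x 1) ->
  is_derive x (1:R) (fun y => \sum_(i <- s) k i * h i y) (\sum_(i <- s) k i * derive1 (h i) x).
Proof.
move=> dh; elim: s => [|a s IH].
  under eq_fun do rewrite big_nil. rewrite big_nil. exact: is_derive_cst.
under eq_fun do rewrite big_cons. rewrite big_cons.
have Ha : is_derive x (1:R) (k a \*: h a) (k a *: derive1 (h a) x).
  apply: is_deriveZ. rewrite derive1E. exact: derivableP.
have := is_deriveD Ha IH. by [].
Qed.

Lemma lin_derivable (I : eqType) (s : seq I) (k : I -> R) (h : I -> R -> R) (x : R) :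
  (forall i, derivable (h i) x 1) ->
  derivable (fun y => \sum_(i <- s) k i * h i y) x 1 /\
  derive1 (fun y => \sum_(i <- s) k i * h i y) x = \sum_(i <- s) k i * derive1 (h i) x.
Proof.
move=> dh; have H := is_derive_lin s k dh; split.
  exact: ex_derive.
by rewrite derive1E derive_val.
Qed.
End An.

End P1.
Import P1.

Module P2.
Import Order.TTheory GRing.Theory Num.Theory.

Lemma cls_eq (T : finType) (r : rel T) x y :
  (forall x, r x x) -> (forall x y, r x y -> r y x) ->
  (forall x y z, r x y -> r y z -> r x z) ->
  (cls r x == cls r y) = r x y.
Proof.
move=> rr rs rt; apply/eqP/idP.
- move=> /(congr1 val) /= /setP /(_ y); rewrite !inE rr => ->; done.
- move=> rxy; apply: val_inj => /=; apply/setP => w; rewrite !inE.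
  apply/idP/idP => H; [exact: rt (rs _ _ rxy) H | exact: rt rxy H].
Qed.

Lemma cls_surj (T : finType) (r : rel T) (C : classes r) : exists x, C = cls r x.
Proof.
case: C => S HS0; case/existsP: (HS0) => v /eqP HS; exists v; apply: val_inj => /=; done.
Qed.

Section Frame.
Variables (G : graph) (V0 V1 : {set gV G}) (A : seq nat).
Hypothesis HV : V1 \subset V0.

Lemma frame_rel_refl a x : @frame_rel G V0 a x x.
Proof. by rewrite /frame_rel eqxx. Qed.
Lemma frame_rel_sym a x y : @frame_rel G V0 a x y -> frame_rel V0 y x.
Proof.
rewrite /frame_rel => /orP [/eqP->|/andP[/eqP e h]]; first by rewrite eqxx.
by rewrite e eqxx -e h orbT.
Qed.
Lemma frame_rel_trans a x y z : @frame_rel G V0 a x y -> frame_rel V0 y z -> frame_rel V0 x z.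
Proof.
rewrite /frame_rel => /orP [/eqP->|/andP[/eqP e h]] //.
move=> /orP [/eqP<-|/andP[/eqP e' h']]; first by rewrite e eqxx /= -e h orbT.
by move: h; rewrite e e' eqxx /= => ->; rewrite orbT.
Qed.

Lemma frame_cls_eq a (x y : gV G * 'I_a) :
  (cls (@frame_rel G V0 _) x == cls (@frame_rel G V0 _) y) = frame_rel V0 x y.
Proof. apply: cls_eq; [exact: frame_rel_refl|exact: frame_rel_sym|exact: frame_rel_trans]. Qed.

Definition FU := frame_union V0 A.

Definition fvert (i : 'I_(size A)) (v : gV G) (j : 'I_(nth 0 A i)) : gV FU :=
  Tagged (fun i : 'I_(size A) => gV (frame V0 (nth 0 A i))) (cls (@frame_rel G V0 _) (v, j)).

Lemma fvert_surj (x : gV FU) : exists i v j, x = @fvert i v j.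
Proof.
case: x => i C; have [[v j] ->] := cls_surj C; by exists i, v, j.
Qed.

Lemma class_of_fvert v1 i v j : is_class_of v1 (@fvert i v j) = (v == v1).
Proof.
rewrite /is_class_of /fvert /=; apply/existsP/idP.
- by case=> j'; rewrite inE /frame_rel /= => /orP [/eqP [-> _]|/andP [/eqP -> _]].
- move=> /eqP <-; exists j; by rewrite inE frame_rel_refl.
Qed.

Lemma fvert_eq i v j i' v' j' :
  (@fvert i v j == @fvert i' v' j') =
  [&& i == i', v == v' & (val j == val j') || (v \in V0)].
Proof.
case: (eqVneq i i') => [E|ne] /=; first subst i'.
  rewrite /fvert eq_Tagged /= frame_cls_eq /frame_rel /= xpair_eqE.
  by case: (v == v') => //=.
apply/negbTE/negP => /eq_tag /=; by apply/eqP.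
Qed.

Lemma V1_rel_fvert i v j i' v' j' :
  @V1_rel G V0 V1 A (@fvert i v j) (@fvert i' v' j') =
  [&& i == i', v == v' & (val j == val j') || (v \in V0)] || ((v == v') && (v \in V1)).
Proof.
rewrite /V1_rel fvert_eq; congr (_ || _); apply/existsP/idP.
- case=> v1 /andP [h1 /andP [c1 c2]]; move: c1 c2; rewrite !class_of_fvert.
  by move=> /eqP -> /eqP ->; rewrite eqxx h1.
- move=> /andP [/eqP <- h]; exists v; by rewrite h !class_of_fvert eqxx.
Qed.

Lemma V1_rel_equiv : [/\ forall x, @V1_rel G V0 V1 A x x, forall x y, @V1_rel G V0 V1 A x y -> @V1_rel G V0 V1 A y x &
   forall x y z, @V1_rel G V0 V1 A x y -> @V1_rel G V0 V1 A y z -> @V1_rel G V0 V1 A x z].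
Proof.
split.
- by move=> x; rewrite /V1_rel eqxx.
- move=> x y; have [i [v [j ->]]] := fvert_surj x; have [i' [v' [j' ->]]] := fvert_surj y.
  rewrite !V1_rel_fvert.
  case/orP => [/and3P [hi /eqP hv h]|/andP [/eqP hv h]]; subst v'; last by rewrite eqxx h orbT.
  by rewrite eq_sym hi eqxx /= eq_sym; case/orP: h => ->; rewrite ?orbT.
- move=> x y z; have [i [v [j ->]]] := fvert_surj x; have [i' [v' [j' ->]]] := fvert_surj y.
  have [i'' [v'' [j'' ->]]] := fvert_surj z; rewrite !V1_rel_fvert.
  case/orP => [/and3P [hi /eqP hv h]|/andP [/eqP hv h]]; subst v'.
  + case/orP => [/and3P [hi' /eqP hv' h']|/andP [/eqP hv' h']]; subst v''; last by rewrite eqxx h' orbT.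
    rewrite eqxx /=; apply/orP; left.
    have -> : i == i'' by apply/eqP; rewrite (eqP hi) (eqP hi').
    case/orP: h => [/eqP ->|->]; by rewrite ?orbT.
  + have hv0 : v \in V0 := fintype.subsetP HV _ h.
    case/orP => [/and3P [_ /eqP hv' _]|/andP [/eqP hv' _]]; subst v''; by rewrite eqxx h orbT.
Qed.

Definition CF := contracted_frame_union V0 V1 A.

Definition IA := {i : 'I_(size A) & 'I_(nth 0 A i)}.

Definition mkE (a : IA) (e : gE G) : gE CF :=
  Tagged (fun i : 'I_(size A) => gE (frame V0 (nth 0 A i))) ((e, tagged a) : gE (frame V0 (nth 0 A (tag a)))).

Definition eG (x : gE CF) : gE G := (tagged x).1.
Definition aI (x : gE CF) : IA := Tagged (fun i : 'I_(size A) => 'I_(nth 0 A i)) (tagged x).2.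

Lemma mkE_aI x : mkE (aI x) (eG x) = x.
Proof. by case: x => i [e j]. Qed.
Lemma eG_mkE a e : eG (mkE a e) = e. Proof. by []. Qed.
Lemma aI_mkE a e : aI (mkE a e) = a. Proof. by case: a. Qed.

Lemma einv_mkE a e : einv (mkE a e) = mkE a (einv e).
Proof. by []. Qed.

Lemma dminus_mkE_eq a e b e' :
  (dminus (mkE a e) == dminus (mkE b e') :> gV CF) =
  [&& tag a == tag b, dminus e == dminus e' & (a == b) || (dminus e \in V0)]
   || ((dminus e == dminus e') && (dminus e \in V1)).
Proof.
have [rr rs rt] := V1_rel_equiv.
case: a => i j; case: b => i' j'.
rewrite /= (@cls_eq _ _ _ _ rr rs rt).
have -> : (Tagged (fun i : 'I_(size A) => gV (frame V0 (nth 0 A i))) (cls (@frame_rel G V0 _) (dminus e, j)))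
  = fvert (dminus e) j by [].
have -> : (Tagged (fun i : 'I_(size A) => gV (frame V0 (nth 0 A i))) (cls (@frame_rel G V0 _) (dminus e', j')))
  = fvert (dminus e') j' by [].
rewrite V1_rel_fvert /=.
case: (eqVneq i i') => [E|ne] //=; first subst i'.
by rewrite eq_Tagged /=.
Qed.
End Frame.

End P2.
Import P2.

Module P3.
Import Order.TTheory GRing.Theory Num.Theory.

Lemma card_bij (T1 T2 : finType) : #|T1| = #|T2| -> exists f : T2 -> T1, forall x, exists y, f y = x.
Proof.
move=> E.
exists (fun y => enum_val (cast_ord (esym E) (enum_rank y))).
move=> x; exists (enum_val (cast_ord E (enum_rank x))).
by rewrite enum_valK cast_ordK enum_rankK.
Qed.

Section Sums.
Variable (X : seq nat).
Local Notation I := (IA X).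

Lemma sum_IA (R : Type) (idx : R) (op : Monoid.com_law idx) (F : I -> R) :
  \big[op/idx]_(a : I) F a = \big[op/idx]_(i : 'I_(size X)) \big[op/idx]_(j : 'I_(nth 0 X i)) F (Tagged _ j).
Proof.
rewrite (@sig_big_dep _ _ _ _ (fun i : 'I_(size X) => 'I_(nth 0 X i)) xpredT (fun i _ => true)
   (fun i j => F (Tagged (fun i : 'I_(size X) => 'I_(nth 0 X i)) j))) /=.
by apply: eq_bigr => -[i j].
Qed.

Lemma sum_tag (R : Type) (idx : R) (op : Monoid.com_law idx) (F : I -> R) (i : 'I_(size X)) :
  \big[op/idx]_(a : I | tag a == i) F a = \big[op/idx]_(j : 'I_(nth 0 X i)) F (Tagged _ j).
Proof.
rewrite big_mkcond sum_IA (bigD1 i) //= [X in op _ X]big1 ?Monoid.mulm1.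
  by apply: eq_bigr => j _; rewrite eqxx.
move=> k /negbTE nk; apply: big1 => j _; by rewrite nk.
Qed.

Lemma card_tag (i : 'I_(size X)) : \sum_(a : I | tag a == i) 1 = nth 0 X i.
Proof. by rewrite sum_tag sum1_card card_ord. Qed.

Lemma sumn_nth : sumn X = \sum_(i < size X) nth 0 X i.
Proof. by rewrite sumnE (big_nth 0) big_mkord. Qed.

Lemma card_IA : #|{: I}| = sumn X.
Proof.
rewrite -sum1_card sum_IA sumn_nth; apply: eq_bigr => i _.
by rewrite sum1_card card_ord.
Qed.

Definition JA := {a : I | 0 < val (tagged a)}.

Lemma card_JA : all (fun a => 0 < a) X -> #|{: JA}| = sumn X - size X.
Proof.
move=> HX.
rewrite card_sig -sum1_card (big_mkcond) /= sum_IA sumn_nth.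
transitivity (\sum_(i < size X) (nth 0 X i - 1)); last first.
  rewrite sumnB; last by move=> i _; have := (all_nthP 0 HX i (ltn_ord i)).
  by rewrite sum1_card card_ord.
apply: eq_bigr => i _.
have : 0 < nth 0 X i by apply: (all_nthP 0 HX i (ltn_ord i)).
rewrite (eq_bigr (fun j : 'I_(nth 0 X i) => ((0 < j) : nat))); last by move=> j _; rewrite inE.
move: (nth 0 X i) => m _; case: m => [|m]; first by rewrite big_ord0.
rewrite big_ord_recl /= add0n (eq_bigr (fun=> 1)) // sum1_card card_ord subn1 //.
Qed.
End Sums.

End P3.
Import P3.

Module P4.
Import Order.TTheory GRing.Theory Num.Theory.
Local Open Scope ring_scope.

Lemma eqIA (X : seq nat) (a b : IA X) :
  (a == b) = (tag a == tag b) && (val (tagged a) == val (tagged b)).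
Proof.
case: a => i j; case: b => i' j'; case: (eqVneq i i') => [E|ne] /=.
  by subst i'; rewrite eq_Tagged /=.
apply/negbTE/negP => /eq_tag /=; by apply/eqP.
Qed.

Section LF.
Variables (R : realType) (I : finType).
Definition LF (F : (I -> R) -> R) := exists k : I -> R, forall u, F u = \sum_a k a * u a.

Lemma lf_ev a0 : LF (fun u => u a0).
Proof.
exists (fun a => (a == a0)%:R) => u; rewrite (bigD1 a0) //= eqxx mul1r big1 ?addr0 //.
by move=> a /negbTE ->; rewrite mul0r.
Qed.
Lemma lf_add F1 F2 : LF F1 -> LF F2 -> LF (fun u => F1 u + F2 u).
Proof.
move=> [k1 h1] [k2 h2]; exists (fun a => k1 a + k2 a) => u.
by rewrite h1 h2 -big_split /=; apply: eq_bigr => a _; rewrite mulrDl.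
Qed.
Lemma lf_scal c F : LF F -> LF (fun u => c * F u).
Proof.
move=> [k h]; exists (fun a => c * k a) => u.
by rewrite h mulr_sumr; apply: eq_bigr => a _; rewrite mulrA.
Qed.
Lemma lf_opp F : LF F -> LF (fun u => - F u).
Proof.
move=> h; have [k hk] := lf_scal (-1) h; exists k => u; by rewrite -hk mulN1r.
Qed.
Lemma lf_sum (J : Type) (s : seq J) (P : pred J) (F : J -> (I -> R) -> R) :
  (forall j, LF (F j)) -> LF (fun u => \sum_(j <- s | P j) F j u).
Proof.
move=> hF; elim: s => [|j s IH].
  exists (fun=> 0) => u; rewrite big_nil big1 //= => a _; by rewrite mul0r.
case: (boolP (P j)) => Pj.
  have [k h] := lf_add (hF j) IH; exists k => u; by rewrite big_cons Pj -h.
have [k h] := IH; exists k => u; by rewrite big_cons (negbTE Pj) -h.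
Qed.
Lemma lf_ext F1 F2 : (forall u, F1 u = F2 u) -> LF F1 -> LF F2.
Proof. move=> e [k h]; exists k => u; by rewrite -e h. Qed.
End LF.

Section Mop.
Variables (R : realType) (A B : seq nat).
Hypotheses (HA : all (fun a => 0 < a)%N A) (HB : all (fun a => 0 < a)%N B).
Hypotheses (Hs : size A = size B) (Hr : sumn A = sumn B) (Hr0 : (0 < sumn A)%N).
Variable rho : JA B -> JA A.
Hypothesis rho_surj : forall x, exists y, rho y = x.

Definition xavg (X : seq nat) (u : IA X -> R) (n : nat) : R :=
  ((nth 0 X n)%:R)^-1 * \sum_(a : IA X | val (tag a) == n) u a.

Definition cc (u : IA A -> R) : R :=
  ((sumn A)%:R)^-1 * \sum_(i < size A) ((nth 0 A i)%:R - (nth 0 B i)%:R) * xavg u i.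

Definition ww (u : IA A -> R) (a : IA A) := u a - xavg u (tag a).

Definition Lw (u : IA A -> R) (b : IA B) : R :=
  if (0 < val (tagged b))%N then \sum_(g : JA B | val g == b) ww u (val (rho g))
  else - \sum_(g : JA B | tag (val g) == tag b) ww u (val (rho g)).

Definition Mop (u : IA A -> R) (b : IA B) : R := xavg u (tag b) + cc u + Lw u b.

Lemma posX (X : seq nat) (i : 'I_(size X)) : all (fun a => 0 < a)%N X -> (0 < nth 0 X i)%N.
Proof. move=> HX; exact: (all_nthP 0 HX i (ltn_ord i)). Qed.

Lemma sum_tagn (X : seq nat) (F : IA X -> R) (i : 'I_(size X)) :
  \sum_(a : IA X | val (tag a) == val i) F a = \sum_(a : IA X | tag a == i) F a.
Proof. by []. Qed.

Lemma sum_tag_const (X : seq nat) (c : R) (i : 'I_(size X)) :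
  \sum_(a : IA X | tag a == i) c = c * (nth 0 X i)%:R.
Proof. by rewrite sum_tag sumr_const card_ord mulr_natr. Qed.

Lemma xavg_mul (X : seq nat) (HX : all (fun a => 0 < a)%N X) (u : IA X -> R) (i : 'I_(size X)) :
  (nth 0 X i)%:R * xavg u i = \sum_(a : IA X | tag a == i) u a.
Proof.
rewrite /xavg mulrA mulfV ?mul1r //; rewrite pnatr_eq0 -lt0n; exact: posX.
Qed.

Lemma xavg_tagconst (X : seq nat) (HX : all (fun a => 0 < a)%N X) (u : IA X -> R) (a : IA X) :
  (forall a', tag a' = tag a -> u a' = u a) -> xavg u (tag a) = u a.
Proof.
move=> h; rewrite /xavg (eq_bigr (fun=> u a)); last by move=> a' /eqP/val_inj; exact: h.
rewrite sum_tagn sum_tag_const mulrC mulfK //; rewrite pnatr_eq0 -lt0n; exact: posX.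
Qed.

Lemma LZ u (i : 'I_(size B)) : \sum_(b : IA B | tag b == i) Lw u b = 0.
Proof.
set h := fun g : JA B => ww u (val (rho g)).
rewrite (bigID (fun b : IA B => 0 < val (tagged b))%N) /=.
have hpos := posX i HB.
pose b0 : IA B := Tagged (fun i : 'I_(size B) => 'I_(nth 0 B i)) (Ordinal hpos).
rewrite [X in _ + X](big_pred1 b0); last first.
  move=> b; rewrite /= eqIA /= -eqn0Ngt; done.
rewrite [Lw u b0]/Lw /=.
rewrite (eq_bigr (fun b => \sum_(g : JA B | val g == b) h g)); last first.
  by move=> b /andP [_ hb]; rewrite /Lw hb.
rewrite (exchange_big_dep xpredT) //=.
rewrite (eq_bigr (fun g => if tag (val g) == i then h g else 0)).
  by rewrite -big_mkcond /= addrN.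
move=> g _.
case: (eqVneq (tag (val g)) i) => e.
  rewrite (eq_bigl (fun b => b == val g)); first by rewrite big_pred1_eq.
  move=> b; apply/idP/idP.
  - by case/andP => _ /eqP gb; apply/eqP; symmetry; exact: gb.
  - move=> /eqP ->; rewrite eqxx andbT (valP g) andbT; exact/eqP.
rewrite big_pred0 // => b; apply/negP => /andP [/andP [/eqP tb _] /eqP gb].
move: e; case: g gb => g' pg /= ->; by rewrite tb eqxx.
Qed.

Lemma xavg_const (u : IA A -> R) (c : R) n : (n < size A)%N -> (forall a, u a = c) -> xavg u n = c.
Proof.
move=> hn hu; rewrite /xavg (eq_bigr (fun=> c)) //.
have := sum_tag_const c (Ordinal hn); rewrite -sum_tagn /= => ->.
rewrite mulrC mulfK // pnatr_eq0 -lt0n; exact: (posX (Ordinal hn) HA).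
Qed.

Lemma Mop_tagconst (u : IA A -> R) : (forall a a', tag a = tag a' -> u a = u a') ->
  forall b b', tag b = tag b' -> Mop u b = Mop u b'.
Proof.
move=> hu.
have hw : forall a, ww u a = 0.
  by move=> a; rewrite /ww xavg_tagconst ?subrr // => a' e; exact: hu.
have hL : forall b, Lw u b = 0.
  move=> b; rewrite /Lw; case: ifP => _; [rewrite big1 // | rewrite big1 ?oppr0 //] => g _; exact: hw.
move=> b b' e; by rewrite /Mop !hL e.
Qed.

Lemma Mop_const (u : IA A -> R) (c : R) : (forall a, u a = c) -> forall b b', Mop u b = Mop u b'.
Proof.
move=> hu.
have hw : forall a, ww u a = 0.
  move=> a; rewrite /ww (xavg_const (ltn_ord (tag a)) hu) hu subrr //.
have hL : forall b, Lw u b = 0.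
  move=> b; rewrite /Lw; case: ifP => _; [rewrite big1 // | rewrite big1 ?oppr0 //] => g _; exact: hw.
have hx : forall b : IA B, xavg u (tag b) = c.
  move=> b; apply: xavg_const => //; rewrite Hs; exact: ltn_ord.
move=> b b'; by rewrite /Mop !hL !hx.
Qed.

Lemma xavg_zero (u : IA A -> R) : (forall i : 'I_(size A), \sum_(a : IA A | tag a == i) u a = 0) ->
  forall n, xavg u n = 0.
Proof.
move=> hu n; rewrite /xavg; case: (ltnP n (size A)) => hn.
  by have := hu (Ordinal hn); rewrite -sum_tagn /= => ->; rewrite mulr0.
rewrite big_pred0 ?mulr0 // => a; apply/negbTE/eqP => e.
by move: (ltn_ord (tag a)); rewrite e ltnNge hn.
Qed.

Lemma Mop_zsum (u : IA A -> R) : (forall i : 'I_(size A), \sum_(a : IA A | tag a == i) u a = 0) ->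
  forall i' : 'I_(size B), \sum_(b : IA B | tag b == i') Mop u b = 0.
Proof.
move=> hu i'; have hx := xavg_zero hu.
have hc : cc u = 0 by rewrite /cc big1 ?mulr0 // => i _; rewrite hx mulr0.
rewrite (eq_bigr (fun b => Lw u b)); first exact: LZ.
by move=> b _; rewrite /Mop hx hc !add0r.
Qed.

Lemma sum_by_tag (X : seq nat) (F : IA X -> R) :
  \sum_(a : IA X) F a = \sum_(i < size X) \sum_(a : IA X | tag a == i) F a.
Proof. by rewrite (partition_big (fun a : IA X => tag a) xpredT). Qed.

Lemma Mop_sum (u : IA A -> R) : \sum_(a : IA A) u a = 0 -> \sum_(b : IA B) Mop u b = 0.
Proof.
move=> hu.
have hL : \sum_(b : IA B) Lw u b = 0.
  by rewrite sum_by_tag big1 // => i _; exact: LZ.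
rewrite /Mop big_split /= hL addr0 big_split /= sumr_const card_IA.
rewrite sum_by_tag.
rewrite (eq_bigr (fun i : 'I_(size B) => (nth 0 B i)%:R * xavg u i)); last first.
  move=> i _; rewrite (eq_bigr (fun=> xavg u i)); last by move=> b /eqP ->.
  by rewrite sum_tag_const mulrC.
have -> : \sum_(i < size B) (nth 0 B i)%:R * xavg u i = \sum_(i < size A) (nth 0 B i)%:R * xavg u i.
  by rewrite Hs.
have -> : cc u *+ sumn B = \sum_(i < size A) ((nth 0 A i)%:R - (nth 0 B i)%:R) * xavg u i.
  rewrite /cc -Hr -[X in X = _]mulr_natr mulrC mulrA mulfV ?mul1r // pnatr_eq0 -lt0n //.
rewrite -big_split /=.
rewrite (eq_bigr (fun i : 'I_(size A) => (nth 0 A i)%:R * xavg u i)); last first.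
  by move=> i _; rewrite -mulrDl addrC subrK.
rewrite (eq_bigr (fun i : 'I_(size A) => \sum_(a : IA A | tag a == i) u a)); last first.
  by move=> i _; rewrite xavg_mul.
by rewrite -sum_by_tag.
Qed.

Lemma Mop_inj (u : IA A -> R) : (forall b, Mop u b = 0) -> forall a, u a = 0.
Proof.
move=> hM.
have h1 : forall i' : 'I_(size B), xavg u i' + cc u = 0.
  move=> i'.
  have : \sum_(b : IA B | tag b == i') Mop u b = 0 by rewrite big1.
  rewrite /Mop big_split /= LZ addr0.
  rewrite (eq_bigr (fun=> xavg u i' + cc u)); last by move=> b /eqP ->.
  rewrite sum_tag_const => /eqP; rewrite mulf_eq0 pnatr_eq0 eqn0Ngt (posX i' HB) orbF.
  by move/eqP.
have h2 : forall n, (n < size A)%N -> xavg u n = - cc u.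
  move=> n hn; rewrite Hs in hn; have := h1 (Ordinal hn) => /= /eqP.
  by rewrite addr_eq0 => /eqP.
have hc : cc u = 0.
  have : cc u = - cc u * ((sumn A)%:R^-1 * ((sumn A)%:R - (sumn B)%:R)).
    rewrite {1}/cc (eq_bigr (fun i : 'I_(size A) => ((nth 0 A i)%:R - (nth 0 B i)%:R) * - cc u)); last first.
      by move=> i _; rewrite h2.
    rewrite -mulr_suml sumrB -!natr_sum -sumn_nth.
    have -> : (\sum_(i < size A) nth 0 B i)%N = sumn B by rewrite sumn_nth Hs.
    by rewrite mulrA mulrC.
  by rewrite Hr subrr mulr0 mulr0.
have hx : forall n, (n < size A)%N -> xavg u n = 0 by move=> n hn; rewrite h2 // hc oppr0.
have hL : forall b, Lw u b = 0.
  move=> b; have := hM b; rewrite /Mop hc addr0 hx ?add0r //; rewrite Hs; exact: ltn_ord.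
have hw : forall a, ww u a = u a by move=> a; rewrite /ww hx ?subr0 //; exact: ltn_ord.
have h5 : forall a : IA A, (0 < val (tagged a))%N -> u a = 0.
  move=> a ha; have [g hg] := rho_surj (Sub a ha).
  have := hL (val g); rewrite /Lw (valP g).
  rewrite (big_pred1 g); last by move=> g'; rewrite /= val_eqE.
  by rewrite hg /= hw.
move=> a; case: (posnP (val (tagged a))) => ha; last exact: h5.
have := xavg_mul HA u (tag a); rewrite (hx _ (ltn_ord _)) mulr0.
have hrest : \sum_(a' | (tag a' == tag a) && (a' != a)) u a' = 0.
  apply: big1 => a' /andP [t1 t2]; apply: h5; move: t2; rewrite eqIA t1 /= ha lt0n; done.
by rewrite (bigD1 a) //= hrest addr0 => ->.
Qed.

Lemma lf_xavg n : LF (fun u : IA A -> R => xavg u n).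
Proof. apply: lf_scal; apply: lf_sum => a; exact: lf_ev. Qed.

Lemma Mop_lf b : LF (fun u => Mop u b).
Proof.
have hc : LF cc.
  apply: lf_scal; apply: lf_sum => i; apply: lf_scal; exact: lf_xavg.
have hw : forall a, LF (fun u => ww u a).
  move=> a; apply: lf_add; [exact: lf_ev|apply: lf_opp; exact: lf_xavg].
have hL : LF (fun u => Lw u b).
  rewrite /Lw; case: (0 < val (tagged b))%N.
    by apply: lf_sum => g; exact: hw.
  by apply: lf_opp; apply: lf_sum => g; exact: hw.
apply: lf_add => //; apply: lf_add => //; exact: lf_xavg.
Qed.
End Mop.

End P4.
Import P4.

Module P5.
Import Order.TTheory GRing.Theory Num.Theory.
Local Open Scope ring_scope.

Section Gen.
Variable R : realType.

Lemma cont_of (H : graph) (g : gE H -> R -> R) :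
  (forall e e', dminus e = dminus e' -> g e 0 = g e' 0) ->
  exists phi : gV H -> R, forall e, g e 0 = phi (dminus e).
Proof.
move=> hg.
exists (fun X => if [pick e | dminus e == X] is Some e then g e 0 else 0).
move=> e; case: pickP => [e0 /eqP h|/(_ e)]; last by rewrite eqxx.
by apply: hg; rewrite h.
Qed.

Lemma kirch_of (H : graph) (g : gE H -> R) :
  (forall e0, \sum_(e | dminus e == dminus e0) g e = 0) ->
  forall X, \sum_(e | dminus e == X) g e = 0.
Proof.
move=> hg X; case: (pickP (fun e => dminus e == X)) => [e0 /eqP <-|none]; first exact: hg.
by rewrite big_pred0.
Qed.

Lemma lf_lin (I J : finType) (F : (I -> R) -> R) (c : J -> R) (w : J -> I -> R) (P : pred J) :
  LF F -> F (fun a => \sum_(j | P j) c j * w j a) = \sum_(j | P j) c j * F (w j).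
Proof.
move=> [k hk]; rewrite hk.
under eq_bigr do rewrite mulr_sumr.
rewrite exchange_big /=; apply: eq_bigr => j _.
by rewrite hk mulr_sumr; apply: eq_bigr => a _; rewrite mulrCA.
Qed.

Lemma lf_sumf (I J : finType) (F : (I -> R) -> R) (w : J -> I -> R) (P : pred J) :
  LF F -> F (fun a => \sum_(j | P j) w j a) = \sum_(j | P j) F (w j).
Proof.
move=> h; have := lf_lin (fun=> 1) w P h.
have -> : (fun a => \sum_(j | P j) (fun=> 1) j * w j a) = (fun a => \sum_(j | P j) w j a).
  by apply: funext => a; apply: eq_bigr => j _; rewrite mul1r.
by under eq_bigr do rewrite mul1r.
Qed.

End Gen.
Section Gen2.
Variable R : realType.
Lemma lf_zero (I : finType) (F : (I -> R) -> R) : LF F -> F (fun=> 0) = 0.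
Proof. move=> [k hk]; rewrite hk big1 // => a _; by rewrite mulr0. Qed.

Lemma Mop_const' (A B : seq nat) (HA : all (fun a => 0 < a)%N A) (Hs : size A = size B)
  (rho : JA B -> JA A) (u : IA A -> R) :
  (forall a a', u a = u a') -> forall b b', Mop rho u b = Mop rho u b'.
Proof.
move=> hu b b'; case: (pickP (@predT (IA A))) => [a0 _|none].
  by apply: (@Mop_const R A B HA Hs rho u (u a0)) => a; exact: hu.
by apply: (@Mop_const R A B HA Hs rho u 0) => a; have := none a.
Qed.
End Gen2.

Section Transfer.
Variables (R : realType) (G : graph) (V0 V1 : {set gV G}) (A B : seq nat).
Hypothesis HG : wf_graph G.
Hypothesis HV : V1 \subset V0.
Hypotheses (HA : all (fun a => 0 < a)%N A) (HB : all (fun a => 0 < a)%N B).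
Hypotheses (Hs : size A = size B) (Hr : sumn A = sumn B) (Hr0 : (0 < sumn A)%N).
Variable rho : JA B -> JA A.
Hypothesis rho_surj : forall x, exists y, rho y = x.

Definition Tf (f : gE (CF V0 V1 A) -> R -> R) : gE (CF V0 V1 B) -> R -> R :=
  fun eps x => Mop rho (fun a => f (mkE V0 V1 a (@eG G V0 V1 _ eps)) x) (@aI G V0 V1 _ eps).

Lemma sum_edges (X : seq nat) (P : IA X -> gE G -> bool) (F : gE (CF V0 V1 X) -> R) :
  \sum_(eps | P (@aI G V0 V1 _ eps) (@eG G V0 V1 _ eps)) F eps = \sum_(b : IA X) \sum_(e | P b e) F (mkE V0 V1 b e).
Proof.
rewrite pair_big_dep /=.
rewrite (reindex (fun p : IA X * gE G => mkE V0 V1 p.1 p.2)) /=; last first.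
  exists (fun eps => (@aI G V0 V1 _ eps, @eG G V0 V1 _ eps)) => [[b e] _|eps _] /=; first by rewrite aI_mkE.
  by rewrite mkE_aI.
by apply: eq_bigl => -[b e] /=; rewrite aI_mkE.
Qed.

Lemma Tf_eq (f : gE (CF V0 V1 A) -> R -> R) (b : IA B) (e : gE G) x :
  Tf f (mkE V0 V1 b e) x = Mop rho (fun a => f (mkE V0 V1 a e) x) b.
Proof. by rewrite /Tf aI_mkE. Qed.

Definition chr (X : seq nat) (a : IA X) e (b0 : IA X) e0 :=
  [&& tag a == tag b0, dminus e == dminus e0 & (a == b0) || (dminus e \in V0)]
   || ((dminus e == dminus e0) && (dminus e \in V1)).

Lemma sum_vertex (X : seq nat) (F : gE (CF V0 V1 X) -> R) b0 e0 :
  \sum_(eps | dminus eps == dminus (mkE V0 V1 b0 e0) :> gV (CF V0 V1 X)) F eps =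
  \sum_(b : IA X) \sum_(e | chr b e b0 e0) F (mkE V0 V1 b e).
Proof.
rewrite -sum_edges; apply: eq_bigl => eps.
by rewrite /chr -(dminus_mkE_eq HV) mkE_aI.
Qed.

Lemma chrV1 X (a b0 : IA X) e e0 : dminus e0 \in V1 -> chr a e b0 e0 = (dminus e == dminus e0).
Proof.
move=> h; rewrite /chr; case: (eqVneq (dminus e) (dminus e0)) => [->|ne].
  by rewrite h orbT.
by rewrite /= !andbF.
Qed.

Lemma chrW X (a b0 : IA X) e e0 : dminus e0 \notin V1 -> dminus e0 \in V0 ->
  chr a e b0 e0 = (tag a == tag b0) && (dminus e == dminus e0).
Proof.
move=> h1 h0; rewrite /chr; case: (eqVneq (dminus e) (dminus e0)) => [->|ne].
  by rewrite (negbTE h1) h0 !orbT !andbT orbF.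
by rewrite /= !andbF.
Qed.

Lemma chrO X (a b0 : IA X) e e0 : dminus e0 \notin V0 ->
  chr a e b0 e0 = (a == b0) && (dminus e == dminus e0).
Proof.
move=> h0; have h1 : dminus e0 \notin V1.
  by apply/negP => h; move: h0; rewrite (fintype.subsetP HV _ h).
rewrite /chr; case: (eqVneq (dminus e) (dminus e0)) => [->|ne].
  rewrite (negbTE h1) (negbTE h0) !andbT !orbF /=.
  by apply/idP/idP => [/andP [] //|/eqP ->]; rewrite !eqxx.
by rewrite /= !andbF.
Qed.

Lemma sum_split_filter (I J : finType) (P : pred I) (Q : pred J) (F : I -> J -> R) :
  \sum_(i : I) \sum_(j | P i && Q j) F i j = \sum_(i | P i) \sum_(j | Q j) F i j.
Proof.
rewrite [RHS]big_mkcond; apply: eq_bigr => i _; case: (P i) => //=.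
by rewrite big_pred0.
Qed.

Local Notation FA := (CF V0 V1 A).
Local Notation FB := (CF V0 V1 B).

Lemma Tf_lin (f : gE FA -> R -> R) (eps : gE FB) :
  exists k : IA A -> R, Tf f eps = fun y => \sum_a k a * f (mkE V0 V1 a (@eG G V0 V1 _ eps)) y.
Proof.
have [k hk] := Mop_lf R rho (@aI G V0 V1 _ eps); exists k; apply: funext => y.
by rewrite /Tf hk.
Qed.

Lemma Tf_der (f : gE FA -> R -> R) (eps : gE FB) :
  (forall e x, derivable (f e) x 1) ->
  (forall x, derivable (Tf f eps) x 1) /\
  derive1 (Tf f eps) = Tf (fun e => derive1 (f e)) eps.
Proof.
move=> hd; have [k hk] := Mop_lf R rho (@aI G V0 V1 _ eps).
have E : Tf f eps = fun y => \sum_a k a * f (mkE V0 V1 a (@eG G V0 V1 _ eps)) y.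
  by apply: funext => y; rewrite /Tf hk.
split.
  move=> x; rewrite E; exact: (lin_derivable _ k (fun i => hd _ x)).1.
apply: funext => x; rewrite E (lin_derivable _ k (fun i => hd _ x)).2 /Tf hk //.
Qed.

Lemma Tf_eigen lam (f : gE FA -> R -> R) :
  kirchhoff_eigenfunction lam f -> kirchhoff_eigenfunction lam (Tf f).
Proof.
move=> [hd [hr [[phi hphi] hk]]].
split; [|split; [|split]].
- move=> eps x.
  have [d1 E1] := Tf_der eps (fun e x => (hd e x).1).
  have [d2 E2] := Tf_der eps (fun e x => (hd e x).2.1).
  split; first exact: d1.
  rewrite E1; split; first exact: d2.
  rewrite E2.
  have [k hk'] := Mop_lf R rho (@aI G V0 V1 _ eps).
  rewrite /Tf !hk' -sumrN mulr_sumr; apply: eq_bigr => a _.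
  by rewrite -mulrN (hd _ x).2.2 mulrCA.
- move=> eps x; case: eps => i [e j] /=.
  rewrite /Tf /=; congr (Mop rho _ _); apply: funext => a.
  exact: (hr (mkE V0 V1 a e) x).
- apply: cont_of => eps eps'; rewrite -(mkE_aI eps) -(mkE_aI eps') => /eqP.
  move: (@aI G V0 V1 _ eps) (@eG G V0 V1 _ eps) (@aI G V0 V1 _ eps') (@eG G V0 V1 _ eps').
  move=> b e b' e'; rewrite (dminus_mkE_eq HV) !Tf_eq.
  have fA : forall a e a' e', dminus (mkE V0 V1 a e) == dminus (mkE V0 V1 a' e') :> gV FA ->
      f (mkE V0 V1 a e) 0 = f (mkE V0 V1 a' e') 0.
    by move=> a1 e1 a2 e2 /eqP h; rewrite !hphi h.
  have hV1 : dminus e = dminus e' -> dminus e \in V1 ->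
      Mop rho (fun a => f (mkE V0 V1 a e) 0) b = Mop rho (fun a => f (mkE V0 V1 a e') 0) b'.
    move=> ve h1.
    have -> : (fun a => f (mkE V0 V1 a e) 0) = (fun a => f (mkE V0 V1 a e') 0).
      apply: funext => a; apply: fA; by rewrite (dminus_mkE_eq HV) ve !eqxx.
    apply: (Mop_const' HA Hs) => a a'; apply: fA; rewrite (dminus_mkE_eq HV); apply/orP; right; by rewrite eqxx -ve h1.
  case/orP => [/and3P [tb /eqP ve h] | /andP [/eqP ve h1]]; last exact: hV1.
  case: (boolP (dminus e \in V1)) => h1; first exact: hV1.
  case/orP: h => [/eqP bb | h0].
    subst b'; congr (Mop rho _ _); apply: funext => a; apply: fA.
    by rewrite (dminus_mkE_eq HV) !eqxx ve eqxx.
  have -> : (fun a => f (mkE V0 V1 a e) 0) = (fun a => f (mkE V0 V1 a e') 0).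
    apply: funext => a; apply: fA; by rewrite (dminus_mkE_eq HV) !eqxx ve eqxx.
  apply: (Mop_tagconst HA); last exact/eqP.
  move=> a a' ta; apply: fA; rewrite (dminus_mkE_eq HV) ta !eqxx -ve h0 orbT //.
- apply: kirch_of => eps0; rewrite -(mkE_aI eps0).
  move: (@aI G V0 V1 _ eps0) (@eG G V0 V1 _ eps0) => b0 e0.
  have hd1 : forall e x, derivable (f e) x 1 := fun e x => (hd e x).1.
  under eq_bigr do rewrite (Tf_der _ hd1).2.
  rewrite sum_vertex.
  under eq_bigr do under eq_bigr do rewrite Tf_eq.
  set D := fun a e => derive1 (f (mkE V0 V1 a e)) 0.
  have hkA : forall a1 e1, \sum_(a : IA A) \sum_(e | chr a e a1 e1) D a e = 0.
    move=> a1 e1; rewrite -(sum_vertex (fun eps => derive1 (f eps) 0)); exact: hk.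
  set u := fun a => \sum_(e | dminus e == dminus e0) D a e.
  have hMu : forall (P : pred (gE G)) b, \sum_(e | P e) Mop rho (fun a => D a e) b =
      Mop rho (fun a => \sum_(e | P e) D a e) b.
    by move=> P b; rewrite (lf_sumf _ _ (Mop_lf R rho b)).
  case: (boolP (dminus e0 \in V1)) => h1.
    under eq_bigr => b _ do rewrite (eq_bigl _ _ (fun e => @chrV1 _ b b0 e e0 h1)) hMu.
    apply: (Mop_sum HA HB Hs Hr Hr0).
    case: (pickP (@predT (IA A))) => [a1 _|none]; last by rewrite big_pred0.
    have := hkA a1 e0; under eq_bigr => a _ do rewrite (eq_bigl _ _ (fun e => @chrV1 _ a a1 e e0 h1)).
    done.
  case: (boolP (dminus e0 \in V0)) => h0.
    under eq_bigr => b _ do rewrite (eq_bigl _ _ (fun e => @chrW _ b b0 e e0 h1 h0)).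
    rewrite sum_split_filter.
    under eq_bigr do rewrite hMu.
    apply: (Mop_zsum HB) => i.
    have := hkA (Tagged (fun i : 'I_(size A) => 'I_(nth 0 A i)) (Ordinal (posX i HA))) e0.
    under eq_bigr => a _ do rewrite (eq_bigl _ _ (fun e => @chrW _ a _ e e0 h1 h0)).
    by rewrite sum_split_filter.
  under eq_bigr => b _ do rewrite (eq_bigl _ _ (fun e => @chrO _ b b0 e e0 h0)).
  rewrite sum_split_filter big_pred1_eq hMu.
  have -> : (fun a => \sum_(e | dminus e == dminus e0) D a e) = (fun=> 0).
    apply: funext => a; have := hkA a e0.
    under eq_bigr => a' _ do rewrite (eq_bigl _ _ (fun e => @chrO _ a' a e e0 h0)).
    by rewrite sum_split_filter big_pred1_eq.
  exact: (lf_zero (Mop_lf R rho b0)).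
Qed.
Lemma transfer_has_m lam m :
  @has_m_indep_eigenfunctions R FA lam m -> @has_m_indep_eigenfunctions R FB lam m.
Proof.
move=> [fs [he hi]]; exists (fun i => Tf (fs i)); split.
  by move=> i; apply: Tf_eigen.
move=> c hc; apply: hi => eps x hx.
rewrite -(mkE_aI eps); move: (@aI G V0 V1 _ eps) (@eG G V0 V1 _ eps) => a e.
pose u := fun a => \sum_(i < m) c i * fs i (mkE V0 V1 a e) x.
suff : forall a, u a = 0 by apply.
apply: (Mop_inj HA HB Hs Hr rho_surj) => b.
rewrite /u (lf_lin c (fun i a => fs i (mkE V0 V1 a e) x) xpredT (Mop_lf R rho b)).
have := hc (mkE V0 V1 b e) x hx.
by under eq_bigr do rewrite Tf_eq.
Qed.
End Transfer.

End P5.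
Import P5.

Module P6.
Import Order.TTheory GRing.Theory Num.Theory.

Definition ps (j : nat) (A : seq nat) := \sum_(a <- A) a ^ j.

Lemma bern c j : c ^ j * (c + j) <= c * (c + 1) ^ j.
Proof.
elim: j => [|j IH]; first by rewrite !expn0 mul1n muln1 addn0.
rewrite !expnS.
move: IH; set X := c ^ j; set Y := (c + 1) ^ j => IH.
have h2 : X * c <= c * Y by nia.
nia.
Qed.

Lemma exists_big n c : exists j, 0 < j /\ n * c ^ j < (c + 1) ^ j.
Proof.
case: c => [|c].
  by exists 1; rewrite exp0n // muln0 add0n exp1n.
exists (n * c.+1).+1; split => //.
have := bern c.+1 (n * c.+1).+1.
set j := (n * c.+1).+1; set X := c.+1 ^ j; set Y := (c.+1 + 1) ^ j => h.
have : c.+1 * (n * X) < c.+1 * Y.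
  apply: (leq_trans _ h); rewrite /j; nia.
by rewrite ltn_pmul2l.
Qed.

Lemma ps_rem j M A : M \in A -> ps j A = M ^ j + ps j (rem M A).
Proof. by move=> h; rewrite /ps (perm_big _ (perm_to_rem h)) big_cons. Qed.

Lemma expn_mono m n j : m <= n -> m ^ j <= n ^ j.
Proof. move=> h; elim: j => [|j IH]; by rewrite ?expn0 // !expnS leq_mul. Qed.

Lemma max_in (A : seq nat) : A != [::] -> \max_(a <- A) a \in A.
Proof.
elim: A => [|a A IH] // _; rewrite big_cons.
case: A IH => [|b A] IH; first by rewrite big_nil maxn0 mem_head.
have := IH isT; set m := \max_(c <- b :: A) c => hin.
rewrite /maxn; case: ltnP => _; by rewrite inE ?hin ?eqxx ?orbT.
Qed.

Lemma le_max (A : seq nat) a : a \in A -> a <= \max_(c <- A) c.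
Proof. move=> h; exact: (@leq_bigmax_seq _ A xpredT (fun c => c) a h). Qed.

Lemma ps_le j c A : (forall a, a \in A -> a <= c) -> ps j A <= size A * c ^ j.
Proof.
move=> h; elim: A h => [|a A IH] h; first by rewrite /ps big_nil.
rewrite /ps big_cons /= mulSn leq_add //.
  by apply: expn_mono; apply: h; rewrite mem_head.
apply: IH => b hb; apply: h; by rewrite inE hb orbT.
Qed.

Lemma ps_perm n (A B : seq nat) : size A = n -> size B = n ->
  (forall j, 0 < j -> ps j A = ps j B) -> perm_eq A B.
Proof.
elim: n A B => [|n IH] A B.
  by move=> /size0nil -> /size0nil ->.
wlog hAB : A B / \max_(b <- B) b <= \max_(a <- A) a.
  move=> W hA hB hps; case: (leqP (\max_(b <- B) b) (\max_(a <- A) a)) => h.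
    exact: W.
  rewrite perm_sym; apply: W => // [|j hj]; [exact: ltnW | by rewrite hps].
move=> hA hB hps.
set M := \max_(a <- A) a.
have MA : M \in A by apply: max_in; case: A hA {M hps hAB}.
have MB : M \in B.
  apply/negPn/negP => nMB.
  have hlt : forall b, b \in B -> b < M.
    move=> b hb; have h1 : b <= M := leq_trans (le_max hb) hAB.
    have h2 : b != M by apply/eqP => e; move: nMB; rewrite -e hb.
    by rewrite ltn_neqAle h2 h1.
  have M0 : 0 < M.
    case: B hB hlt {hps hAB nMB} => // b B' _ h; have := h b (mem_head _ _); lia.
  have hle : forall b, b \in B -> b <= M.-1.
    move=> b hb; have := hlt b hb; lia.
  have [j [hj hbig]] := exists_big n.+1 M.-1.
  have := ps_le j hle; rewrite hB -(hps j hj) (ps_rem j MA).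
  move: hbig; rewrite (_ : M.-1 + 1 = M); last by lia.
  move=> h1 h2; have := leq_trans (leq_addr (ps j (rem M A)) (M ^ j)) h2; rewrite leqNgt h1 //.
apply: (perm_trans (perm_to_rem MA)); rewrite perm_sym.
apply: (perm_trans (perm_to_rem MB)); rewrite perm_cons perm_sym.
apply: IH.
- by rewrite size_rem // hA.
- by rewrite size_rem // hB.
- move=> j hj; have := hps j hj; rewrite (ps_rem j MA) (ps_rem j MB); exact: addnI.
Qed.

End P6.
Import P6.

Module P7.
Import Order.TTheory GRing.Theory Num.Theory.
Local Open Scope ring_scope.

Section Deg.
Variable R : realType.
Definition degR (H : graph) (X : gV H) : R := \sum_(e : gE H | dminus e == X) 1.
Definition NR (H : graph) (k : nat) : R := \sum_(e : gE H) (degR (dminus e)) ^+ k.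

Lemma NR_iso H1 H2 k : graph_iso H1 H2 -> NR H1 k = NR H2 k.
Proof.
move=> [fV [fE [bV [bE [hm [hp hi]]]]]].
have degE : forall X, degR (fV X) = degR X.
  move=> X; rewrite /degR (reindex fE) /=; last exact: onW_bij.
  apply: eq_bigl => e; rewrite -hm (inj_eq (bij_inj bV)) //.
rewrite /NR [RHS](reindex fE) /=; last exact: onW_bij.
by apply: eq_bigr => e _; rewrite -hm degE.
Qed.
End Deg.

Section Comp.
Variables (R : realType) (G : graph) (V0 V1 : {set gV G}) (X : seq nat).
Hypothesis HV : V1 \subset V0.
Hypothesis HX : all (fun a => 0 < a)%N X.

Definition dG (v : gV G) : R := \sum_(e : gE G | dminus e == v) 1.

Definition PP (j : nat) : R := (ps j X)%:R.

Definition Tt (k : nat) (e : gE G) : R :=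
  let v := dminus e in
  if v \in V1 then (sumn X)%:R * ((sumn X)%:R * dG v) ^+ k
  else if v \in V0 then dG v ^+ k * PP k.+1
  else (sumn X)%:R * dG v ^+ k.

Lemma card_IA' : #|(xpredT : pred (IA X))| = sumn X.
Proof. exact: card_IA. Qed.

Lemma deg_mkE (a0 : IA X) e0 :
  degR R (dminus (mkE V0 V1 a0 e0)) =
  (if dminus e0 \in V1 then (sumn X)%:R * dG (dminus e0)
   else if dminus e0 \in V0 then (nth 0 X (tag a0))%:R * dG (dminus e0)
   else dG (dminus e0) :> R).
Proof.
rewrite /degR (sum_vertex HV (fun=> 1)).
case: (boolP (dminus e0 \in V1)) => h1.
  under eq_bigr => b _ do rewrite (eq_bigl _ _ (fun e => @chrV1 _ V0 V1 _ b a0 e e0 h1)).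
  by rewrite sumr_const card_IA' mulr_natl.
case: (boolP (dminus e0 \in V0)) => h0.
  under eq_bigr => b _ do rewrite (eq_bigl _ _ (fun e => @chrW _ V0 V1 _ b a0 e e0 h1 h0)).
  by rewrite sum_split_filter sum_tag_const mulrC.
under eq_bigr => b _ do rewrite (eq_bigl _ _ (fun e => @chrO _ V0 V1 HV _ b a0 e e0 h0)).
by rewrite sum_split_filter big_pred1_eq.
Qed.

Lemma NR_CF k : NR R (CF V0 V1 X) k = \sum_(e : gE G) Tt k e :> R.
Proof.
have E := @sum_edges R G V0 V1 X (fun _ _ => true) (fun eps => degR R (dminus eps) ^+ k).
rewrite /= in E; rewrite /NR E.
rewrite exchange_big /=; apply: eq_bigr => e _.
under eq_bigr => a _ do rewrite deg_mkE.
rewrite /Tt; case: (dminus e \in V1).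
  by rewrite sumr_const [RHS]mulr_natl; congr (_ *+ _); exact: card_IA.
case: (dminus e \in V0); last by rewrite sumr_const [RHS]mulr_natl; congr (_ *+ _); exact: card_IA.
rewrite sum_by_tag.
rewrite (eq_bigr (fun i : 'I_(size X) => ((nth 0 X i)%:R * dG (dminus e)) ^+ k * (nth 0 X i)%:R)); last first.
  move=> i _; rewrite (eq_bigr (fun=> ((nth 0 X i)%:R * dG (dminus e)) ^+ k)); last by move=> a /eqP ->.
  by rewrite sum_tag_const.
rewrite /PP /ps natr_sum mulr_sumr (big_nth 0) big_mkord; apply: eq_bigr => i _.
by rewrite natrX exprMn exprS; ring.
Qed.
End Comp.

End P7.
Import P7.

Module P8.
Import Order.TTheory GRing.Theory Num.Theory.
Local Open Scope ring_scope.

Lemma noniso (R : realType) (G : graph) (V0 V1 : {set gV G}) (s r : nat) (A B : seq nat) :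
  wf_graph G -> V1 \proper V0 ->
  is_partition s r A -> is_partition s r B -> ~~ perm_eq A B ->
  ~ graph_iso (contracted_frame_union V0 V1 A) (contracted_frame_union V0 V1 B).
Proof.
move=> HG HP hA hB hperm hiso.
have HV : V1 \subset V0 := proper_sub HP.
have [_ [w w0 w1]] := properP HP.
have [ew hew] := HG.2.2.2 w.
move: hA hB => /andP [/andP [/eqP sA pA] /eqP rA] /andP [/andP [/eqP sB pB] /eqP rB].
move/negP: hperm; apply; apply: (@ps_perm s) => // j; case: j => // k _.
have := NR_iso R k hiso; rewrite (NR_CF R A HV) (NR_CF R B HV) => /eqP.
rewrite -subr_eq0 -sumrB.
set S := \sum_(e : gE G) (if (dminus e \notin V1) && (dminus e \in V0) then dG R (dminus e) ^+ k else 0).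
have -> : \sum_(e : gE G) (Tt R V0 V1 A k e - Tt R V0 V1 B k e) =
    S * (PP R A k.+1 - PP R B k.+1).
  rewrite /S mulr_suml; apply: eq_bigr => e _; rewrite /Tt rA rB.
  case: (dminus e \in V1) => /=; first by rewrite subrr mul0r.
  case: (dminus e \in V0) => /=; last by rewrite subrr mul0r.
  by rewrite mulrBr.
have dpos : forall e : gE G, 0 <= dG R (dminus e).
  by move=> e; rewrite /dG; apply: sumr_ge0 => e' _; exact: ler01.
have Spos : 0 < S.
  rewrite /S (bigD1 ew) //= hew w1 w0 /=.
  apply: ltr_pwDl.
    apply: exprn_gt0; rewrite /dG (bigD1 ew) ?hew ?eqxx //=.
    apply: ltr_pwDl; first exact: ltr01.
    by apply: sumr_ge0 => e' _; exact: ler01.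
  apply: sumr_ge0 => e _; case: ifP => _ //; exact: exprn_ge0.
rewrite mulf_eq0 (gt_eqF Spos) /= subr_eq0 /PP eqr_nat => /eqP; done.
Qed.

End P8.
Import P8.

Unset Implicit Arguments.

Theorem corollary5p9 (R : realType) (G : graph) (V0 V1 : {set gV G})
    (s r : nat) (A B : seq nat) :
  wf_graph G ->
  V1 \proper V0 ->
  4 <= r ->
  is_partition s r A -> is_partition s r B ->
  ~~ perm_eq A B ->
  isospectral R (contracted_frame_union V0 V1 A) (contracted_frame_union V0 V1 B) /\
  ~ graph_iso (contracted_frame_union V0 V1 A) (contracted_frame_union V0 V1 B).
Proof.
move=> HG HP h4 hA hB hperm; split; last exact: (noniso R HG HP hA hB hperm).
have HV : V1 \subset V0 := proper_sub HP.
move: (hA) (hB) => /andP [/andP [/eqP sA pA] /eqP rA] /andP [/andP [/eqP sB pB] /eqP rB].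
have Hs : size A = size B by rewrite sA sB.
have Hr : sumn A = sumn B by rewrite rA rB.
have Hr0 : (0 < sumn A)%N by rewrite rA; apply: leq_trans h4.
have cJ : #|{: JA A}| = #|{: JA B}| by rewrite !card_JA // Hs Hr.
have [rho hrho] := card_bij cJ.
have [rho' hrho'] := card_bij (esym cJ).
move=> lam m; split.
  exact: (transfer_has_m HV pA pB Hs Hr Hr0 hrho).
apply: (transfer_has_m HV pB pA (esym Hs) (esym Hr) _ hrho'); by rewrite -Hr.
Qed.
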